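(* Let $E$ be an odd exact Courant algebroid over a manifold $M$ of dimension $n$, with scalar product $\langle\cdot,\cdot\rangle$ and anchor $\pi$. The assignment $(\mathcal G,\mathcal F)\mapsto(\mathcal F_1,\mathcal F_2):=(\mathcal F,\mathcal G^{\mathrm{end}}\mathcal F)$ gives an equivalence between $B_n$-generalized almost pseudo-Hermitian structures on $E$ and pairs $(\mathcal F_1,\mathcal F_2)$ of commuting $B_n$-generalized almost complex structures with $U:=\ker\mathcal F_1=\ker\mathcal F_2$ such that the bilinear form $(u,v)\mapsto\langle\mathcal F_1\mathcal F_2u,v\rangle$ on $U^\perp$ is nondegenerate and such that $\pi:\{u\in U^\perp\mid\mathcal F_1u=-\mathcal F_2u\}\to TM$ is an isomorphism when $n$ is even, while $\pi:\{u\in E\mid\mathcal F_1u=-\mathcal F_2u\}\to TM$ is an isomorphism when $n$ is odd.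
   Context: An odd exact Courant algebroid over an $n$-manifold $M$ is a Courant algebroid isomorphic to $TM\oplus T^*M\oplus\mathbb R$ with scalar product $\langle X+\xi+\lambda,Y+\eta+\mu\rangle=\tfrac12(\eta(X)+\xi(Y))+\lambda\mu$, anchor the projection and Dorfman bracket $[X+\xi+\lambda,Y+\eta+\mu]=\mathcal L_XY+\mathcal L_X\eta-i_Yd\xi+2\mu\,d\lambda+i_Xi_YH-2(\mu\,i_XF-\lambda\,i_YF)+X(\mu)-Y(\lambda)+F(X,Y)$ for some closed $2$-form $F$ and $3$-form $H$ with $dH=-F\wedge F$. A generalized metric is a rank $n$ subbundle $E_-\subset E$ on which $\langle\cdot,\cdot\rangle$ is nondegenerate and with $\pi|_{E_-}$ an isomorphism onto $TM$; $E_+:=E_-^\perp$, $\mathcal G^{\mathrm{end}}=\pm\mathrm{Id}$ on $E_\pm$. A $B_n$-generalized almost complex structure is an endomorphism $\mathcal F$ whose $i$-eigenbundle $L\subset E\otimes\mathbb C$ is isotropic of rank $n$ with $L\cap\bar L=0$, whose $-i$-eigenbundle is $\bar L$ and which vanishes on the rank-one bundle $(L\oplus\bar L)^\perp$. A $B_n$-generalized almost pseudo-Hermitian structure is a pair $(\mathcal G,\mathcal F)$ of a generalized metric and a $B_n$-generalized almost complex structure with $\mathcal G^{\mathrm{end}}\mathcal F=\mathcal F\mathcal G^{\mathrm{end}}$. *)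

(* Defs.v *)
(* Fiberwise (pointwise) linear-algebra model of an odd exact
   Courant algebroid E = TM + T*M + R at a point of an n-manifold.
   Vectors of a fibre are row vectors 'rV[R]_(N n), N n = 2n+1, coordinates
   ordered (X_1..X_n, xi_1..xi_n, lambda).  Endomorphisms are square matrices
   acting on the right: the endomorphism A applied to u is  u *m A, so the
   composite "A after B" is  B *m A.  Subspaces are represented by the row
   space of a square matrix (mxalgebra). *)
From HB Require Import structures.
From mathcomp Require Import all_boot all_order all_algebra.
From mathcomp Require Import complex.
Set Implicit Arguments.
Unset Strict Implicit.
Unset Printing Implicit Defensive.
Import Order.TTheory GRing.Theory Num.Theory.
Local Open Scope ring_scope.

Section Defs.
Variables (R : rcfType) (n : nat).

Definition N : nat := (n + n).+1.

(* scalar product <X+xi+l, Y+eta+m> = 1/2 (eta(X) + xi(Y)) + l m *)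
Definition Qmx : 'M[R]_N :=
  \matrix_(i < N, j < N)
    (if (((i : nat) < n)%N && ((j : nat) == (i : nat) + n)%N)
        || (((j : nat) < n)%N && ((i : nat) == (j : nat) + n)%N)
     then 2^-1
     else if ((i : nat) == n + n)%N && ((j : nat) == n + n)%N then 1 else 0).

Definition sprod (u v : 'rV[R]_N) : 'M[R]_1 := u *m Qmx *m v^T.

Definition anchor : 'M[R]_(N, n) := \matrix_(i < N, j < n) ((i : nat) == (j : nat))%:R.

Definition perp (S : 'M[R]_N) : 'M[R]_N := kermx (Qmx *m S^T).

Definition nondeg_on (W B : 'M[R]_N) : Prop :=
  forall u : 'rV[R]_N, (u <= W)%MS ->
    (forall v : 'rV[R]_N, (v <= W)%MS -> u *m B *m v^T = 0) -> u = 0.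

(* the restriction of the linear map A : E -> TM to the subspace S is an
   isomorphism onto TM = R^n (injective on S and surjective) *)
Definition iso_on (S : 'M[R]_N) (A : 'M[R]_(N, n)) : Prop :=
  \rank (S *m A) = \rank S /\ row_full (S *m A).

(* generalized metric: rank n subspace E_- on which <.,.> is nondegenerate
   and on which pi is an isomorphism onto TM *)
Definition gen_metric (Em : 'M[R]_N) : Prop :=
  [/\ \rank Em = n, nondeg_on Em Qmx & iso_on Em anchor].

(* E_+ := E_-^perp, and G^end = +Id on E_+, -Id on E_- *)
Definition Gend (Em : 'M[R]_N) : 'M[R]_N :=
  proj_mx (perp Em) Em - proj_mx Em (perp Em).

Definition cplx {m p : nat} (A : 'M[R]_(m, p)) : 'M[R[i]]_(m, p) :=
  map_mx (fun x => x%:C%C) A.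
Definition conjmx {m p : nat} (A : 'M[R[i]]_(m, p)) : 'M[R[i]]_(m, p) :=
  map_mx (@conjc R) A.
Definition iC : R[i] := Complex 0 1.

Definition BnGACS (F : 'M[R]_N) : Prop :=
  let L := eigenspace (cplx F) iC in
  let Lb := conjmx L in
  [/\ L *m cplx Qmx *m L^T = 0,
      \rank L = n,
      (L :&: Lb == (0 : 'M[complex R]_N))%MS,
      (eigenspace (cplx F) (- iC) == Lb)%MS
    & kermx (cplx Qmx *m (L + Lb)%MS^T) *m cplx F = 0
                                  ].

Definition pseudo_hermitian (Em F : 'M[R]_N) : Prop :=
  [/\ gen_metric Em, BnGACS F & F *m Gend Em = Gend Em *m F].

Definition admissible_pair (F1 F2 : 'M[R]_N) : Prop :=
  let U := kermx F1 in
  [/\ BnGACS F1 /\ BnGACS F2,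
      F1 *m F2 = F2 *m F1,
      (kermx F1 == kermx F2)%MS,
      nondeg_on (perp U) (F2 *m F1 *m Qmx)
    & if odd n then iso_on (kermx (F1 + F2)) anchor
      else iso_on (perp U :&: kermx (F1 + F2))%MS anchor].

End Defs.

(* Main.v *)
Require Import Defs.
From HB Require Import structures.
From mathcomp Require Import all_boot all_order all_algebra.
From mathcomp Require Import complex zify ring lra.
Set Implicit Arguments. Unset Strict Implicit. Unset Printing Implicit Defensive.
Import Order.TTheory GRing.Theory Num.Theory.
Local Open Scope ring_scope.

Section Q.
Variables (R : rcfType) (n : nat).
Local Notation N := (N n).
Local Notation Q := (Qmx R n).

Definition sg (i : nat) : nat := if (i < n)%N then (i + n)%N else if (i < n + n)%N then (i - n)%N else i.

Lemma sg_c1 (i j : nat) : (i < (n+n).+1)%N -> 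
 (((i < n) && (j == i + n)) || ((j < n) && (i == j + n)) = (j == sg i) && (i != n+n))%N.
Proof. rewrite /sg => h; case: ifP => h1; [|case: ifP => h2]; apply/idP/idP; lia. Qed.
Lemma sg_c2 (i j : nat) : (i < (n+n).+1)%N -> 
 (((i == n+n) && (j == n + n)) = (j == sg i) && (i == n+n))%N.
Proof. rewrite /sg => h; case: ifP => h1; [|case: ifP => h2]; apply/idP/idP; lia. Qed.

Lemma QE (i j : 'I_N) : Q i j = if (j : nat) == sg i then (if (i : nat) == n + n then 1 else 2^-1) else 0.
Proof.
rewrite mxE sg_c1 ?sg_c2 //; case: eqP => //= _; case: eqP => //.
Qed.

Lemma sg_lt (i : nat) : (i < (n+n).+1)%N -> (sg i < (n+n).+1)%N.
Proof. rewrite /sg; case: ifP => h1; [|case: ifP => h2]; lia. Qed.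
Lemma sgK (i : nat) : (i < (n+n).+1)%N -> sg (sg i) = i.
Proof.
move=> h; rewrite {2}/sg; case: ifP => h1; [|case: ifP => h2]; rewrite /sg.
- by rewrite ifF ?ifT; lia.
- by rewrite ifT; lia.
- by rewrite ifF ?ifF; lia.
Qed.
Lemma sg_eq (i j : nat) : (i < (n+n).+1)%N -> (j < (n+n).+1)%N -> (j == sg i) = (i == sg j).
Proof. move=> hi hj; apply/idP/idP => /eqP ->; rewrite sgK //; exact: sg_lt. Qed.
Lemma sg_top (i : nat) : (i < (n+n).+1)%N -> (sg i == n + n)%N = (i == n + n)%N.
Proof. rewrite /sg => h; case: ifP => h1; [|case: ifP => h2]; apply/idP/idP; lia. Qed.

Lemma Q_tr : Q^T = Q.
Proof.
apply/matrixP => i j; rewrite mxE !QE sg_eq //.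
case: eqP => // e; rewrite e sg_top //; exact: ltn_ord.
Qed.

Definition Qi : 'M[R]_N := \matrix_(i < N, j < N)
  (if (j : nat) == sg i then (if (i : nat) == n + n then 1 else 2) else 0).

Lemma QQi : Q *m Qi = 1%:M.
Proof.
apply/matrixP => i j; rewrite !mxE.
have hi := ltn_ord i.
pose s : 'I_N := inord (sg i).
have hs : (s : nat) = sg i by rewrite inordK //; exact: sg_lt.
rewrite (bigD1 s) //= big1 ?addr0; last first.
  move=> k kns; rewrite QE; case: (eqVneq (k : nat) (sg i)) => [e|]; last by rewrite mul0r.
  have eks : k = s by apply: val_inj; rewrite /= hs e.
  by rewrite eks eqxx in kns.

rewrite QE hs eqxx !mxE hs sgK // sg_top //.
case: (eqVneq (j : nat) i) => [e|ne].
  have -> : j = i by apply: val_inj.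
  rewrite eqxx /=; case: eqP => _; first by rewrite mulr1.
  by rewrite mulVf // pnatr_eq0.
rewrite mulr0; case: eqVneq => // e; by rewrite e eqxx in ne.
Qed.

Lemma Q_unit : Q \in unitmx.
Proof. by case: (mulmx1_unit QQi). Qed.
End Q.
Section Gen.
Variables (F : fieldType) (m : nat).

Lemma full_kill k p (S : 'M[F]_(k, m)) (M : 'M[F]_(m, p)) :
  (1%:M <= S)%MS -> S *m M = 0 -> M = 0.
Proof. by case/submxP => X e HS; rewrite -[M]mul1mx e -mulmxA HS mulmx0. Qed.

Lemma adds_kill k1 k2 p (A : 'M[F]_(k1, m)) (B : 'M[F]_(k2, m)) (M : 'M[F]_(m, p)) :
  A *m M = 0 -> B *m M = 0 -> (A + B)%MS *m M = 0.
Proof. by move=> hA hB; apply/sub_kermxP; rewrite addsmx_sub; apply/andP; split; apply/sub_kermxP. Qed.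

Lemma rows_kill k p (S : 'M[F]_(k, m)) (M : 'M[F]_(m, p)) :
  (forall v : 'rV_m, (v <= S)%MS -> v *m M = 0) -> S *m M = 0.
Proof. by move=> H; apply/row_matrixP => i; rewrite row_mul row0; apply: H; exact: row_sub. Qed.

Lemma eq_on_adds k1 k2 p (A : 'M[F]_(k1, m)) (B : 'M[F]_(k2, m)) (M1 M2 : 'M[F]_(m, p)) :
  (1%:M <= A + B)%MS -> A *m M1 = A *m M2 -> B *m M1 = B *m M2 -> M1 = M2.
Proof.
move=> hf h1 h2; apply/eqP; rewrite -subr_eq0; apply/eqP.
apply: (full_kill hf); apply: adds_kill; by rewrite mulmxBr ?h1 ?h2 subrr.
Qed.

Lemma tr0 k p (A : 'M[F]_(k, p)) : A^T = 0 -> A = 0.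
Proof. by move=> h; rewrite -[A]trmxK h trmx0. Qed.

Lemma trE0 k l (A : 'M[F]_(k, m)) (M : 'M[F]_m) (B : 'M[F]_(l, m)) :
  A *m M *m B^T = 0 -> B *m M^T *m A^T = 0.
Proof. by move=> h; rewrite -[B]trmxK -!trmx_mul mulmxA h trmx0. Qed.

Lemma bil_kill k (S : 'M[F]_(k, m)) (M : 'M[F]_m) :
  (1%:M <= S)%MS -> S *m M *m S^T = 0 -> M = 0.
Proof.
move=> hf h; apply: (full_kill hf); apply: tr0; apply: (full_kill hf).
by rewrite trmx_mul mulmxA; exact: trE0.
Qed.

Lemma adds_bilL k1 k2 l (A : 'M[F]_(k1, m)) (B : 'M[F]_(k2, m)) (M : 'M[F]_m) (T : 'M[F]_(l, m)) :
  A *m M *m T^T = 0 -> B *m M *m T^T = 0 -> (A + B)%MS *m M *m T^T = 0.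
Proof. by rewrite -!mulmxA; apply: adds_kill. Qed.

Lemma adds_bilR k1 k2 l (A : 'M[F]_(k1, m)) (B : 'M[F]_(k2, m)) (M : 'M[F]_m) (T : 'M[F]_(l, m)) :
  T *m M *m A^T = 0 -> T *m M *m B^T = 0 -> T *m M *m (A + B)%MS^T = 0.
Proof.
move=> h1 h2; rewrite -[M]trmxK; apply: trE0; apply: adds_bilL; exact: trE0.
Qed.

Variables (Q0 : 'M[F]_m) (hQt : Q0^T = Q0) (hQu : Q0 \in unitmx).

Lemma symE k l (A : 'M[F]_(k, m)) (B : 'M[F]_(l, m)) :
  A *m Q0 *m B^T = 0 -> B *m Q0 *m A^T = 0.
Proof. by move=> h; rewrite -hQt; apply: trE0. Qed.

Lemma rank_perp0 k (S : 'M[F]_(k, m)) : \rank (kermx (Q0 *m S^T)) = (m - \rank S)%N.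
Proof.
rewrite mxrank_ker -mxrank_tr trmx_mul trmxK mxrankMfree //.
by rewrite row_free_unit unitmx_tr.
Qed.

Lemma Q0_kill k (x : 'M[F]_(k, m)) : x *m Q0 = 0 -> x = 0.
Proof. by move=> h; rewrite -[x]mulmx1 -(mulmxV hQu) mulmxA h mul0mx. Qed.

Lemma orth_full k l (x : 'M[F]_(k, m)) (S : 'M[F]_(l, m)) :
  (1%:M <= S)%MS -> x *m Q0 *m S^T = 0 -> x = 0.
Proof.
move=> hf h; apply: Q0_kill; apply: tr0; apply: (full_kill hf).
by rewrite trmx_mul hQt mulmxA; exact: symE.
Qed.

End Gen.
Lemma negX_eq0 (F : numFieldType) m p (X : 'M[F]_(m,p)) : X = - X -> X = 0.
Proof.
move=> h; apply/eqP; have : X *+ 2 == 0 by rewrite mulr2n {1}h addNr.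
by rewrite -scaler_nat scalemx_eq0 pnatr_eq0.
Qed.

Section Real.
Variables (R : rcfType) (n : nat).
Local Notation N := (N n).
Local Notation Q := (Qmx R n).
Let hQt := Q_tr R n.
Let hQu := Q_unit R n.

Definition RG (F : 'M[R]_N) :=
  [/\ F *m Q = - (Q *m F^T), F *m F *m F = - F & \rank F = (n + n)%N].

Lemma rank_perp (S : 'M[R]_N) : \rank (perp S) = (N - \rank S)%N.
Proof. exact: rank_perp0. Qed.

Lemma perp_kill (S : 'M[R]_N) : perp S *m Q *m S^T = 0.
Proof. by rewrite -mulmxA mulmx_ker. Qed.

Lemma perpP k (u : 'M[R]_(k, N)) S : (u <= perp S)%MS = (u *m Q *m S^T == 0).
Proof. by rewrite /perp; apply/sub_kermxP/eqP; rewrite mulmxA. Qed.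

Section RGF.
Variable F : 'M[R]_N.
Hypothesis hF : RG F.
Local Notation P0 := (1%:M + F *m F).

Lemma F3 : F *m F *m F = - F. Proof. by case: hF. Qed.

Lemma imF2 k (u : 'M[R]_(k, N)) : (u <= F)%MS -> u *m F *m F = - u.
Proof. by case/submxP => w ->; rewrite -!mulmxA (mulmxA F F F) F3 mulmxN. Qed.

Lemma P0F : P0 *m F = 0.
Proof. by rewrite mulmxDl mul1mx F3 addrN. Qed.

Lemma FP0 : F *m P0 = 0.
Proof. by rewrite mulmxDr mulmx1 mulmxA F3 addrN. Qed.

Lemma split1 : (1%:M : 'M[R]_N) = - (F *m F) + P0.
Proof. by rewrite addrCA addNr addr0. Qed.

Lemma full_imker : (1%:M <= F + kermx F)%MS.
Proof.
rewrite {1}split1; apply: addmx_sub_adds; first by rewrite eqmx_opp submxMl.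
by apply/sub_kermxP; exact: P0F.
Qed.

Lemma imker0 k (u : 'M[R]_(k, N)) : (u <= F)%MS -> u *m F = 0 -> u = 0.
Proof. by move=> h1 h2; rewrite -[u]opprK -(imF2 h1) h2 mul0mx oppr0. Qed.

Lemma rank_kerF : \rank (kermx F) = 1%N.
Proof. by case: hF => _ _ r; rewrite mxrank_ker r /N subSnn. Qed.

Lemma perp_ker : (perp (kermx F) == F)%MS.
Proof.
have h : (F <= perp (kermx F))%MS.
  by rewrite perpP; case: hF => -> _ _; rewrite mulNmx -mulmxA -trmx_mul mulmx_ker trmx0 mulmx0 oppr0.
apply/eqmxP; apply: eqmx_sym; apply/eqmxP.
by rewrite -(mxrank_leqif_eq h).2 rank_perp rank_kerF; case: hF => _ _ ->; rewrite /N subn1.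
Qed.

Lemma sub_F_perp k (u : 'M[R]_(k, N)) : (u <= perp (kermx F))%MS = (u <= F)%MS.
Proof. by rewrite (eqmxP perp_ker). Qed.

Lemma nondegF (x : 'rV[R]_N) : (x <= F)%MS ->
  (forall v : 'rV_N, (v <= F)%MS -> x *m Q *m v^T = 0) -> x = 0.
Proof.
move=> hx H; apply: (orth_full hQt hQu full_imker); apply: adds_bilR.
  apply: (symE hQt); rewrite -mulmxA; apply: rows_kill => v hv.
  by rewrite mulmxA; apply: (symE hQt); apply: H.
by apply/eqP; rewrite -perpP sub_F_perp.
Qed.

End RGF.

Section Inv.
Variables (S1 S2 G : 'M[R]_N).
Hypotheses (hf : (1%:M <= S1 + S2)%MS) (h1 : S1 *m G = S1) (h2 : S2 *m G = - S2)
  (h12 : S1 *m Q *m S2^T = 0).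

Lemma inv_GG : G *m G = 1%:M.
Proof.
apply: (eq_on_adds hf); first by rewrite mulmxA !h1 mulmx1.
by rewrite mulmxA h2 mulNmx h2 opprK mulmx1.
Qed.

Lemma bilG (X Y : 'M[R]_N) : X *m (G *m Q - Q *m G^T) *m Y^T =
  (X *m G) *m Q *m Y^T - X *m Q *m (Y *m G)^T.
Proof. by rewrite mulmxBr mulmxBl !mulmxA trmx_mul !mulmxA. Qed.

Lemma inv_sym : G *m Q = Q *m G^T.
Proof.
apply/eqP; rewrite -subr_eq0; apply/eqP; apply: (bil_kill hf).
have h21 : S2 *m Q *m S1^T = 0 by apply: (symE hQt).
apply: adds_bilL; apply: adds_bilR; rewrite bilG ?h1 ?h2.
all: by rewrite ?linearN /= ?mulmxN ?mulNmx ?h12 ?h21 ?oppr0 ?subrr ?addr0.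
Qed.

Lemma inv_ker : (S2 == kermx (G + 1%:M))%MS.
Proof.
apply/andP; split; first by apply/sub_kermxP; rewrite mulmxDr h2 mulmx1 addNr.
have /sub_addsmxP [[a b] /= e] := submx_trans (submx1 (kermx (G + 1%:M))) hf.
have k0 := mulmx_ker (G + 1%:M).
have ha : a *m S1 = 0.
  apply: negX_eq0; apply/eqP; rewrite -subr_eq0 opprK; apply/eqP.
  move: k0; rewrite e mulmxDr mulmx1 mulmxDl -!mulmxA h1 h2 mulmxN.
  by rewrite addrACA addNr addr0.
by rewrite e ha add0r submxMl.
Qed.
End Inv.

Section GendS.
Variable Em : 'M[R]_N.
Hypothesis hnd : nondeg_on Em Q.
Local Notation Ep := (perp Em).

Lemma cap0 : (Ep :&: Em)%MS = 0.
Proof.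
apply/eqP; rewrite -submx0; apply/rV_subP => v; rewrite sub_capmx => /andP[h1 h2].
rewrite (hnd h2) ?sub0mx // => w /submxP [a ->].
by move: h1; rewrite perpP => /eqP h; rewrite trmx_mul mulmxA h mul0mx.
Qed.

Lemma fullE : (1%:M <= Ep + Em)%MS.
Proof.
by rewrite sub1mx /row_full mxrank_disjoint_sum ?cap0 // rank_perp subnK ?rank_leq_row.
Qed.

Lemma EmG : Em *m Gend Em = - Em.
Proof.
rewrite /Gend mulmxBr proj_mx_0 ?cap0 // proj_mx_id ?sub0r //.
by rewrite capmxC cap0.
Qed.

Lemma EpG : Ep *m Gend Em = Ep.
Proof.
rewrite /Gend mulmxBr proj_mx_id ?cap0 // proj_mx_0 ?subr0 //.
by rewrite capmxC cap0.
Qed.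

Lemma G_GG : Gend Em *m Gend Em = 1%:M.
Proof. exact: (inv_GG fullE EpG EmG). Qed.

Lemma G_sym : Gend Em *m Q = Q *m (Gend Em)^T.
Proof. exact: (inv_sym fullE EpG EmG (perp_kill Em)). Qed.

Lemma G_ker : (Em == kermx (Gend Em + 1%:M))%MS.
Proof. exact: (inv_ker fullE EpG EmG). Qed.
End GendS.

Section ConvS.
Variables (G0 Em : 'M[R]_N).
Hypotheses (hGG : G0 *m G0 = 1%:M) (hGs : G0 *m Q = Q *m G0^T)
  (hEm : (Em == kermx (G0 + 1%:M))%MS).
Local Notation Ep := (kermx (G0 - 1%:M)).

Lemma EmG0 : Em *m G0 = - Em.
Proof.
have : Em *m (G0 + 1%:M) = 0 by apply/sub_kermxP; rewrite -(eqmxP hEm) submx_refl.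
by rewrite mulmxDr mulmx1 => /eqP; rewrite addr_eq0 => /eqP.
Qed.

Lemma EpG0 : Ep *m G0 = Ep.
Proof.
by have := mulmx_ker (G0 - 1%:M); rewrite mulmxBr mulmx1 => /eqP; rewrite subr_eq0 => /eqP.
Qed.

Lemma fullE0 : (1%:M <= Ep + Em)%MS.
Proof.
have e : (1%:M : 'M[R]_N) = 2^-1 *: (1%:M + G0) + 2^-1 *: (1%:M - G0).
  rewrite -scalerDr addrACA subrr addr0 -mulr2n -scaler_nat scalerA.
  by rewrite mulVf ?scale1r // pnatr_eq0.
rewrite {1}e; apply: addmx_sub_adds; rewrite scalemx_sub //.
  by apply/sub_kermxP; rewrite mulmxBr mulmxDl mul1mx hGG !mulmx1 [G0 + _]addrC subrr.
rewrite (eqmxP hEm); apply/sub_kermxP.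
by rewrite mulmxDr mulmxBl mul1mx hGG !mulmx1; apply/eqP; rewrite addr_eq0 opprB.
Qed.

Lemma EpEm0 : Ep *m Q *m Em^T = 0.
Proof.
apply: negX_eq0.
have e : Ep *m Q *m Em^T = Ep *m G0 *m Q *m Em^T by rewrite EpG0.
rewrite {1}e -(mulmxA Ep G0 Q) hGs mulmxA -(mulmxA _ G0^T) -trmx_mul EmG0.
by rewrite linearN /= mulmxN.
Qed.

Lemma conv_nondeg : nondeg_on Em Q.
Proof.
move=> u hu H; apply: (orth_full hQt hQu fullE0); apply: adds_bilR.
  case/submxP: hu => a ->; rewrite -!mulmxA (mulmxA Em) (symE hQt EpEm0) mulmx0.
  by [].
apply: (symE hQt); rewrite -mulmxA; apply: rows_kill => v hv.
by rewrite mulmxA; apply: (symE hQt); apply: H.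
Qed.

Lemma conv_Gend : Gend Em = G0.
Proof.
have hnd := conv_nondeg.
have hc : (Ep :&: Em)%MS = 0.
  apply/eqP; rewrite -submx0; apply/rV_subP => v; rewrite sub_capmx => /andP[h1 h2].
  have e1 : v *m G0 = v by have := EpG0; move/submxP: h1 => [a ->]; rewrite -mulmxA => ->.
  have e2 : v *m G0 = - v by have := EmG0; move/submxP: h2 => [a ->]; rewrite -mulmxA => ->; rewrite mulmxN.
  by rewrite (negX_eq0 (etrans (esym e1) e2)) sub0mx.
have hsub : (Ep <= perp Em)%MS by rewrite perpP EpEm0.
have hEq : (Ep == perp Em)%MS.
  rewrite -(mxrank_leqif_eq hsub).2 rank_perp.
  have := fullE0; rewrite sub1mx /row_full mxrank_disjoint_sum // => /eqP hr.
  apply/eqP; lia.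
apply: (eq_on_adds (fullE hnd)); last by rewrite (EmG hnd) EmG0.
rewrite (EpG hnd); apply/esym; move/eqmxP: hEq => hEq'.
have : (perp Em <= Ep)%MS by rewrite hEq' submx_refl.
by move/sub_kermxP; rewrite mulmxBr mulmx1 => /eqP; rewrite subr_eq0 => /eqP.
Qed.
End ConvS.

Lemma even_rank (S M : 'M[R]_N) :
  (S *m M <= S)%MS -> S *m M *m M = - S -> ~~ odd (\rank S).
Proof.
move=> hS hM; set r := \rank S; set B := row_base S.
have hB : (B *m M <= B)%MS by rewrite (eqmxMr M (eq_row_base S)) !eq_row_base.
case/submxP: hB => X eX.
have hBS : (B <= S)%MS by rewrite eq_row_base.
have eBM : B *m M *m M = - B.
  by case/submxP: hBS => Y ->; rewrite -!mulmxA (mulmxA S) hM mulmxN.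
have eXX : X *m X = - 1%:M.
  apply: (row_free_inj (row_base_free S)).
  by rewrite -mulmxA -eX mulmxA -eX eBM mulNmx mul1mx.
apply/negP => hodd.
have := congr1 determinant eXX; rewrite det_mulmx -scaleN1r detZ det1 mulr1.
rewrite -signr_odd hodd expr1 => e.
have := sqr_ge0 (\det X); rewrite expr2 e => h.
by have := ltrN10 R; rewrite ltNge h.
Qed.

Section Par.
Variables (Em F : 'M[R]_N).
Hypotheses (hnd : nondeg_on Em Q) (hr : \rank Em = n) (hF : RG F)
  (hc : F *m Gend Em = Gend Em *m F).
Local Notation G := (Gend Em).
Local Notation W1 := (Em :&: F)%MS.
Local Notation W2 := (Em :&: kermx F)%MS.

Lemma FG1 : F *m (G + 1%:M) = (G + 1%:M) *m F.
Proof. by rewrite mulmxDr mulmxDl hc mulmx1 mul1mx. Qed.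

Lemma EmKer k (u : 'M[R]_(k, N)) : (u <= Em)%MS = (u *m (G + 1%:M) == 0).
Proof. by rewrite (eqmxP (G_ker hnd)); apply/sub_kermxP/eqP. Qed.

Lemma EmF k (u : 'M[R]_(k, N)) : (u <= Em)%MS -> (u *m F <= Em)%MS.
Proof. by rewrite !EmKer -mulmxA FG1 mulmxA => /eqP ->; rewrite mul0mx. Qed.

Lemma EmP0 k (u : 'M[R]_(k, N)) : (u <= Em)%MS -> (u *m (1%:M + F *m F) <= Em)%MS.
Proof. by move=> h; rewrite mulmxDr mulmx1 mulmxA addmx_sub //; do 2 apply: EmF. Qed.

Lemma W12 : (W1 :&: W2)%MS = 0.
Proof.
apply/eqP; rewrite -submx0; apply/rV_subP => v; rewrite !sub_capmx => /andP[/andP[_ h1] /andP[_ h2]].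
by rewrite (imker0 hF h1) ?sub0mx //; apply/sub_kermxP.
Qed.

Lemma EmW : (Em == W1 + W2)%MS.
Proof.
apply/andP; split; last by rewrite addsmx_sub !capmxSl.
rewrite {1}(_ : Em = - (Em *m F *m F) + Em *m (1%:M + F *m F)); last first.
  by rewrite mulmxDr mulmx1 mulmxA addrCA addNr addr0.
apply: addmx_sub_adds; rewrite sub_capmx.
  by rewrite !eqmx_opp submxMl andbT; do 2 apply: EmF; exact: submx_refl.
by rewrite EmP0 ?submx_refl //=; apply/sub_kermxP; rewrite -mulmxA P0F // mulmx0.
Qed.

Lemma rank_W : n = (\rank W1 + \rank W2)%N.
Proof. by apply/esym; rewrite -mxrank_disjoint_sum ?W12 // -(eqmx_rank EmW) hr. Qed.

Lemma even_W1 : ~~ odd (\rank W1).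
Proof.
apply: (even_rank (M := F)); last by apply: (imF2 hF); exact: capmxSr.
by rewrite sub_capmx submxMl andbT; apply: EmF; exact: capmxSl.
Qed.

Lemma W2le1 : (\rank W2 <= 1)%N.
Proof. by rewrite -(rank_kerF hF); apply: mxrankS; exact: capmxSr. Qed.

Lemma par_odd : odd n -> (kermx F <= Em)%MS.
Proof.
move=> ho.
have r2 : \rank W2 = 1%N.
  have := W2le1; have := even_W1; move: ho.
  have -> : odd n = odd (\rank W1 + \rank W2) by rewrite -rank_W.
  rewrite oddD.
  by case: (\rank W2) => [|[|k]] //=; rewrite addbF => ->.
have hs : (W2 <= kermx F)%MS by exact: capmxSr.
have : (W2 == kermx F)%MS by rewrite -(mxrank_leqif_eq hs).2 r2 (rank_kerF hF).
by move/eqmxP => <-; exact: capmxSl.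
Qed.

Lemma par_even0 : ~~ odd n -> W2 = 0.
Proof.
move=> he; apply/eqP; rewrite -mxrank_eq0.
have := W2le1; have := even_W1; move: he.
have -> : odd n = odd (\rank W1 + \rank W2) by rewrite -rank_W.
rewrite oddD.
by case: (\rank W2) => [|[|k]] //=; rewrite addbT negbK => ->.
Qed.

Lemma par_even : ~~ odd n -> (Em <= F)%MS.
Proof.
move=> he; rewrite (eqmxP EmW) par_even0 // addsmx_sub capmxSr sub0mx //.
Qed.
End Par.
End Real.
Section Dir1.
Variables (R : rcfType) (n : nat).
Local Notation N := (N n).
Local Notation Q := (Qmx R n).
Let hQt := Q_tr R n.
Let hQu := Q_unit R n.

Lemma iso_eq (S S' : 'M[R]_N) (A : 'M[R]_(N, n)) : (S == S')%MS -> iso_on S A -> iso_on S' A.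
Proof.
move=> e [h1 h2]; have e2 : (S *m A == S' *m A)%MS by apply/eqmxP; apply: eqmxMr; apply/eqmxP.
split; first by rewrite -(eqmx_rank e2) -(eqmx_rank e).
by move: h2; rewrite /row_full (eqmx_rank e2).
Qed.

Variables (Em F : 'M[R]_N).
Hypotheses (hr : \rank Em = n) (hnd : nondeg_on Em Q) (hiso : iso_on Em (anchor R n))
  (hF : RG F) (hc : F *m Gend Em = Gend Em *m F).
Local Notation G := (Gend Em).
Local Notation K := (kermx (F + F *m G)).

Lemma GG : G *m G = 1%:M. Proof. exact: G_GG. Qed.

Lemma G_unit : G \in unitmx. Proof. by case: (mulmx1_unit GG). Qed.

Lemma FGFG : F *m G *m (F *m G) = F *m F.
Proof. by rewrite mulmxA -(mulmxA F G F) -hc mulmxA -mulmxA GG mulmx1. Qed.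

Lemma RG_FG : RG (F *m G).
Proof.
case: hF => h1 h2 h3; split.
- rewrite -mulmxA (G_sym hnd) mulmxA h1 mulNmx -mulmxA -trmx_mul -hc //.
- by rewrite FGFG mulmxA h2 mulNmx.
- by rewrite mxrankMfree ?row_free_unit ?G_unit.
Qed.

Lemma comm_FG : F *m (F *m G) = F *m G *m F.
Proof. by rewrite -mulmxA -hc. Qed.

Lemma ker_FG : (kermx F == kermx (F *m G))%MS.
Proof.
apply/andP; split; apply/sub_kermxP; first by rewrite mulmxA mulmx_ker mul0mx.
by rewrite -[_ *m F]mulmx1 -GG mulmxA -(mulmxA (kermx _) F G) mulmx_ker !mul0mx.
Qed.

Lemma nondeg_FG : nondeg_on (perp (kermx F)) (F *m G *m F *m Q).
Proof.
move=> u; rewrite (sub_F_perp hF) => hu H.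
have hw : (u *m G <= F)%MS by case/submxP: hu => a ->; rewrite -mulmxA hc mulmxA submxMl.
have e : u *m (F *m G *m F *m Q) = - (u *m G *m Q).
  by rewrite -(mulmxA F G F) -hc !mulmxA (imF2 hF hu) !mulNmx.
suff w0 : u *m G = 0 by rewrite -[u]mulmx1 -GG mulmxA w0 mul0mx.
apply: (nondegF hF hw) => v hv; apply/eqP; rewrite -oppr_eq0 -mulNmx -e.
by apply/eqP; apply: H; rewrite (sub_F_perp hF).
Qed.

Lemma FG_split : F + F *m G = (G + 1%:M) *m F.
Proof. by rewrite -(FG1 hc) (mulmxDr F G) mulmx1 addrC. Qed.

Lemma Em_K : (Em <= K)%MS.
Proof. by apply/sub_kermxP; rewrite FG_split mulmxA (eqP (etrans (esym (EmKer hnd _)) (submx_refl Em))) mul0mx. Qed.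

Lemma KF_Em k (u : 'M[R]_(k, N)) : (u <= K)%MS -> (u *m F <= Em)%MS.
Proof. by move/sub_kermxP; rewrite (EmKer hnd) -mulmxA (FG1 hc) -FG_split => ->. Qed.

Lemma iso_FG : if odd n then iso_on K (anchor R n)
  else iso_on (perp (kermx F) :&: K)%MS (anchor R n).
Proof.
case: ifP => ho; apply: iso_eq hiso; apply/andP; split.
- exact: Em_K.
- rewrite {1}(_ : K = - (K *m F *m F) + K *m (1%:M + F *m F)); last first.
    by rewrite (mulmxDr K) mulmx1 mulmxA addrCA addNr addr0.
  apply: addmx_sub; first by rewrite eqmx_opp; apply: (EmF hnd hc); apply: KF_Em.
  apply: submx_trans (par_odd hnd hr hF hc ho); apply/sub_kermxP.
  by rewrite -mulmxA (P0F hF) mulmx0.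
- by rewrite sub_capmx Em_K andbT (sub_F_perp hF) (par_even hnd hr hF hc) ?ho.
- set C := (perp (kermx F) :&: K)%MS.
  have hC : (C <= F)%MS by rewrite -(sub_F_perp hF) capmxSl.
  rewrite -[C]opprK -(imF2 hF hC) eqmx_opp; apply: (EmF hnd hc); apply: KF_Em.
  exact: capmxSr.
Qed.
End Dir1.
Section Dir2.
Variables (R : rcfType) (n : nat).
Local Notation N := (N n).
Local Notation Q := (Qmx R n).
Let hQt := Q_tr R n.
Let hQu := Q_unit R n.

Lemma perp_eq (S S' : 'M[R]_N) : (S == S')%MS -> (perp S == perp S')%MS.
Proof.
have H : forall T T' : 'M[R]_N, (T' <= T)%MS -> (perp T <= perp T')%MS.
  move=> T T' /submxP [X ->]; rewrite perpP trmx_mul mulmxA.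
  by move: (perp_kill T) => ->; rewrite mul0mx.
by case/andP => h1 h2; apply/andP; split; apply: H.
Qed.

Variables (F1 F2 : 'M[R]_N).
Hypotheses (hF1 : RG F1) (hF2 : RG F2) (hcomm : F1 *m F2 = F2 *m F1)
  (hker : (kermx F1 == kermx F2)%MS).

Local Notation A := (F1 *m F2).
Local Notation P0 := (1%:M + F1 *m F1).
Definition sg2 : R := if odd n then -1 else 1.
Definition G0 := - A + sg2 *: P0.
Definition Em0 := if odd n then kermx (F1 + F2) else (perp (kermx F1) :&: kermx (F1 + F2))%MS.

Lemma im12 : (F2 <= F1)%MS.
Proof.
rewrite -(eqmxP (perp_ker hF2)) -(eqmxP (perp_ker hF1)).
by have /eqmxP -> := perp_eq hker; exact: submx_refl.
Qed.

Lemma im21 : (F1 <= F2)%MS.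
Proof.
rewrite -(eqmxP (perp_ker hF2)) -(eqmxP (perp_ker hF1)).
by have /eqmxP -> := perp_eq hker; exact: submx_refl.
Qed.

Lemma F2P0 : F2 *m P0 = 0.
Proof. by rewrite mulmxDr mulmx1 mulmxA (imF2 hF1 im12) addrN. Qed.

Lemma AP0 : A *m P0 = 0. Proof. by rewrite -mulmxA F2P0 mulmx0. Qed.
Lemma P0A : P0 *m A = 0. Proof. by rewrite mulmxA (P0F hF1) mul0mx. Qed.
Lemma P0P0 : P0 *m P0 = P0.
Proof. by rewrite {1}mulmxDl mul1mx -mulmxA (FP0 hF1) mulmx0 addr0. Qed.

Lemma F11_22 : F1 *m F1 = F2 *m F2.
Proof.
apply: (eq_on_adds (full_imker hF1)).
  by rewrite !mulmxA (imF2 hF1 (submx_refl F1)) (imF2 hF2 im21).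
have k2 : kermx F1 *m F2 = 0 by apply/sub_kermxP; rewrite (eqmxP hker) submx_refl.
by rewrite !mulmxA mulmx_ker k2 !mul0mx.
Qed.

Lemma AA : A *m A = - (F1 *m F1).
Proof.
rewrite {1}hcomm mulmxA -(mulmxA F2 F1 F1) mulmxA (imF2 hF1 im12) mulNmx F11_22 //.
Qed.

Lemma sg2sq : sg2 * sg2 = 1.
Proof. by rewrite /sg2; case: ifP; rewrite ?mulrNN mulr1. Qed.

Lemma G0G0 : G0 *m G0 = 1%:M.
Proof.
rewrite /G0 mulmxDl !mulmxDr !mulNmx !mulmxN opprK AA -!scalemxAl -!scalemxAr AP0 P0A.
rewrite P0P0 scalerA sg2sq scale1r !scaler0 oppr0 !addr0 add0r.
by rewrite addrCA addNr addr0.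
Qed.

Lemma AQ : A *m Q = Q *m A^T.
Proof.
case: hF1 => h1 _ _; case: hF2 => h2 _ _.
by rewrite -mulmxA h2 mulmxN mulmxA h1 mulNmx opprK -mulmxA -trmx_mul hcomm.
Qed.

Lemma P0Q : P0 *m Q = Q *m P0^T.
Proof.
case: hF1 => h1 _ _.
rewrite mulmxDl mul1mx linearD /= trmx1 mulmxDr mulmx1 trmx_mul.
by rewrite -mulmxA h1 mulmxN mulmxA h1 mulNmx opprK mulmxA.
Qed.

Lemma G0sym : G0 *m Q = Q *m G0^T.
Proof.
rewrite /G0 mulmxDl mulNmx -scalemxAl AQ P0Q scalemxAr -mulmxN -mulmxDr; congr (_ *m _).
by apply/matrixP => i j; rewrite !mxE.
Qed.

Lemma G0p1_odd : odd n -> G0 + 1%:M = - ((F1 + F2) *m F1).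
Proof.
move=> ho; rewrite /G0 /sg2 ho mulmxDl -hcomm.
by apply/matrixP => i j; rewrite !mxE; lra.
Qed.

Lemma G0p1_even : ~~ odd n -> G0 + 1%:M = - A + P0 + 1%:M.
Proof. by move=> he; rewrite /G0 /sg2 (negbTE he) scale1r. Qed.

Lemma kerG0_odd : odd n -> (kermx (F1 + F2) == kermx (G0 + 1%:M))%MS.
Proof.
move=> ho; rewrite G0p1_odd //; apply/andP; split; apply/sub_kermxP.
  by rewrite mulmxN mulmxA mulmx_ker mul0mx oppr0.
have := mulmx_ker (- ((F1 + F2) *m F1)); rewrite mulmxN mulmxA => /eqP; rewrite oppr_eq0 => /eqP h.
apply: (imker0 hF1) h; apply: submx_trans (submxMl _ _) _.
by rewrite addmx_sub ?submx_refl ?im12.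
Qed.

Lemma kerG0_even : ~~ odd n ->
  (perp (kermx F1) :&: kermx (F1 + F2) == kermx (G0 + 1%:M))%MS.
Proof.
move=> he; rewrite G0p1_even //; apply/andP; split.
  apply/sub_kermxP; set C := (perp (kermx F1) :&: kermx (F1 + F2))%MS.
  have hC : (C <= F1)%MS by rewrite -(sub_F_perp hF1) capmxSl.
  have hK : C *m (F1 + F2) = 0 by apply/sub_kermxP; exact: capmxSr.
  have hCF2 : C *m F2 = - (C *m F1).
    by apply/eqP; rewrite -addr_eq0 addrC -mulmxDr hK.
  have hP : C *m P0 = 0 by rewrite mulmxDr mulmx1 mulmxA (imF2 hF1 hC) addrN.
  rewrite (mulmxDr C (- A + P0)) (mulmxDr C (- A)) mulmxN hP addr0 mulmx1 hcomm mulmxA hCF2 mulNmx (imF2 hF1 hC).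
  by rewrite opprK addNr.
set K := kermx _.
have E : - (K *m A) + K *m P0 + K = 0.
  by have := mulmx_ker (- A + P0 + 1%:M); rewrite (mulmxDr K (- A + P0)) (mulmxDr K (- A)) mulmxN mulmx1.
have hP : K *m P0 = 0.
  have := congr1 (mulmx^~ P0) E; rewrite /= mul0mx !mulmxDl mulNmx -mulmxA AP0 mulmx0.
  rewrite oppr0 add0r -mulmxA P0P0 => /eqP; rewrite addr_eq0 => /eqP; exact: negX_eq0.
have hK1 : K = - (K *m F1 *m F1).
  by apply/eqP; rewrite -addr_eq0 -[X in X + _]mulmx1 -mulmxA -mulmxDr hP.
have hKF : (K <= F1)%MS by rewrite hK1 eqmx_opp submxMl.
have hKA : K *m A = K by apply/eqP; rewrite eq_sym -subr_eq0 addrC; move: E; rewrite hP addr0 => ->.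
rewrite sub_capmx (sub_F_perp hF1) hKF /=; apply/sub_kermxP.
have hKF1 : K *m F1 = - (K *m F2).
  rewrite -{1}hKA -mulmxA -(mulmxA F1 F2 F1) -[F2 *m F1]hcomm !mulmxA (imF2 hF1 hKF).
  by rewrite mulNmx.
by rewrite mulmxDr hKF1 addNr.
Qed.

Lemma Em0_ker : (Em0 == kermx (G0 + 1%:M))%MS.
Proof. by rewrite /Em0; case: ifP => h; [apply: kerG0_odd | apply: kerG0_even; rewrite h]. Qed.

Lemma Gend_Em0 : Gend Em0 = G0.
Proof. exact: (conv_Gend G0G0 G0sym Em0_ker). Qed.

Lemma F1A : F1 *m A = - F2.
Proof. by rewrite hcomm mulmxA hcomm (imF2 hF1 im12). Qed.

Lemma F1G0 : F1 *m G0 = F2.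
Proof. by rewrite /G0 mulmxDr mulmxN F1A opprK -scalemxAr (FP0 hF1) scaler0 addr0. Qed.

Lemma G0F1 : G0 *m F1 = F2.
Proof.
rewrite /G0 mulmxDl mulNmx -scalemxAl (P0F hF1) scaler0 addr0 -mulmxA -hcomm.
by rewrite F1A opprK.
Qed.

Hypothesis hiso : if odd n then iso_on (kermx (F1 + F2)) (anchor R n)
  else iso_on (perp (kermx F1) :&: kermx (F1 + F2))%MS (anchor R n).

Lemma Em0_iso : iso_on Em0 (anchor R n).
Proof. by rewrite /Em0; case: ifP hiso. Qed.

Lemma Em0_metric : gen_metric Em0.
Proof.
have [h1 h2] := Em0_iso; split => //.
- by rewrite -h1; apply/eqP; exact: h2.
- exact: (conv_nondeg G0G0 G0sym Em0_ker).
Qed.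

Lemma Em0_unique (Em' : 'M[R]_N) : gen_metric Em' -> F1 *m Gend Em' = F2 ->
  F1 *m Gend Em' = Gend Em' *m F1 -> (Em' == Em0)%MS.
Proof.
case=> hr hnd _ hF hc.
have eG : Gend Em' = G0.
  apply: (eq_on_adds (full_imker hF1)); first by rewrite hF F1G0.
  have KA : kermx F1 *m A = 0 by rewrite mulmxA mulmx_ker mul0mx.
  have KP : kermx F1 *m P0 = kermx F1 by rewrite mulmxDr mulmx1 mulmxA mulmx_ker mul0mx addr0.
  rewrite /G0 (mulmxDr (kermx F1) (- A)) mulmxN KA oppr0 add0r -scalemxAr KP /sg2.
  case: ifP => ho.
    have := par_odd hnd hr hF1 hc ho; case/submxP => a ->.
    by rewrite -mulmxA (EmG hnd) mulmxN scaleN1r.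
  have hz := par_even0 hnd hr hF1 hc (negbT ho).
  rewrite scale1r; apply/eqP; rewrite -subr_eq0 -[X in _ - X]mulmx1 -mulmxBr.
  rewrite -submx0 -hz sub_capmx; apply/andP; split.
    rewrite (EmKer hnd) -mulmxA mulmxBl mul1mx (mulmxDr (Gend Em')) mulmx1 (G_GG hnd).
    by rewrite opprD addrA addrK subrr mulmx0.
  have e : (Gend Em' - 1%:M) *m F1 = F1 *m (Gend Em' - 1%:M).
    by rewrite mulmxBl (mulmxBr F1) mul1mx mulmx1 hc.
  by apply/sub_kermxP; rewrite -(mulmxA (kermx F1)) e mulmxA mulmx_ker mul0mx.
apply/eqmxP; apply: eqmx_trans (eqmxP (G_ker hnd)) _.
by rewrite eG; apply: eqmx_sym; apply/eqmxP; exact: Em0_ker.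
Qed.
End Dir2.
Section Eig.
Variables (K0 : fieldType) (m : nat) (Fm Qm : 'M[K0]_m).

Lemma eig_cube k (X : 'M[K0]_(k, m)) a : X *m Fm = a *: X ->
  X *m (Fm *m Fm *m Fm + Fm) = (a * a * a + a) *: X.
Proof.
move=> h; rewrite mulmxDr !mulmxA h -!scalemxAl h -scalemxAl h !scalerA scalerDl.
by rewrite ?mulrA.
Qed.

Lemma eig_bil k l (X : 'M[K0]_(k, m)) (Y : 'M[K0]_(l, m)) a b :
  X *m Fm = a *: X -> Y *m Fm = b *: Y ->
  X *m (Fm *m Qm + Qm *m Fm^T) *m Y^T = (a + b) *: (X *m Qm *m Y^T).
Proof.
move=> hX hY; rewrite mulmxDr mulmxDl !mulmxA hX -(mulmxA _ Fm^T) -trmx_mul hY.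
by rewrite linearZ /= -scalemxAl -scalemxAr scalerDl -scalemxAl.
Qed.

Hypothesis hsk : Fm *m Qm = - (Qm *m Fm^T).

Lemma eig_iso k l (X : 'M[K0]_(k, m)) (Y : 'M[K0]_(l, m)) a b :
  X *m Fm = a *: X -> Y *m Fm = b *: Y -> a + b != 0 -> X *m Qm *m Y^T = 0.
Proof.
move=> hX hY hab; have := eig_bil hX hY; rewrite hsk addNr mulmx0 mul0mx => /esym/eqP.
by rewrite scalemx_eq0 (negbTE hab) => /eqP.
Qed.
End Eig.
Section Cplx.
Variables (R : rcfType) (n : nat).
Local Notation N := (N n).
Local Notation Q := (Qmx R n).
Local Notation Qc := (cplx (Qmx R n)).
Local Notation I := (iC R).

Lemma cplxE m p (A : 'M[R]_(m, p)) : cplx A = map_mx (real_complex R) A.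
Proof. by []. Qed.
Lemma conjmxE m p (A : 'M[R[i]]_(m, p)) : Defs.conjmx A = map_mx (@conjc R) A.
Proof. by []. Qed.

Lemma cplxM m p q (A : 'M[R]_(m, p)) (B : 'M[R]_(p, q)) : cplx (A *m B) = cplx A *m cplx B.
Proof. by rewrite !cplxE map_mxM. Qed.
Lemma cplxD m p (A B : 'M[R]_(m, p)) : cplx (A + B) = cplx A + cplx B.
Proof. by rewrite !cplxE map_mxD. Qed.
Lemma cplxN m p (A : 'M[R]_(m, p)) : cplx (- A) = - cplx A.
Proof. by rewrite !cplxE map_mxN. Qed.
Lemma cplxT m p (A : 'M[R]_(m, p)) : cplx (A^T) = (cplx A)^T.
Proof. by rewrite !cplxE map_trmx. Qed.
Lemma cplx_inj m p (A B : 'M[R]_(m, p)) : cplx A = cplx B -> A = B.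
Proof. by rewrite !cplxE; apply: map_mx_inj. Qed.
Lemma cplx_rank m p (A : 'M[R]_(m, p)) : \rank (cplx A) = \rank A.
Proof. by rewrite cplxE mxrank_map. Qed.
Lemma conj_cplx m p (A : 'M[R]_(m, p)) : Defs.conjmx (cplx A) = cplx A.
Proof.
rewrite conjmxE cplxE -map_mx_comp; apply: eq_map_mx => x /=; exact: conjc_real.
Qed.
Lemma conj_rank m p (A : 'M[R[i]]_(m, p)) : \rank (Defs.conjmx A) = \rank A.
Proof. by rewrite conjmxE mxrank_map. Qed.

Lemma iCiC : I * I = -1 :> R[i].
Proof. by rewrite -expr2 sqr_i. Qed.
Lemma iC_neq0 : I != 0 :> R[i].
Proof. by apply/eqP => h; have := iCiC; rewrite h mul0r => /eqP; rewrite eq_sym oppr_eq0 oner_eq0. Qed.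
Lemma conj_iC : conjc I = - I :> R[i].
Proof. by rewrite /iC /conjc /=; congr Complex; rewrite oppr0. Qed.
Lemma iC2_neq0 : I + I != 0 :> R[i].
Proof. by rewrite -mulr2n -mulr_natr mulf_neq0 ?iC_neq0 // pnatr_eq0. Qed.

Lemma Qc_tr : Qc^T = Qc. Proof. by rewrite -cplxT Q_tr. Qed.
Lemma Qc_unit : Qc \in unitmx. Proof. by rewrite cplxE map_unitmx Q_unit. Qed.

Section RGtoB.
Variable F : 'M[R]_N.
Hypothesis hF : RG F.
Local Notation Fc := (cplx F).
Local Notation L := (eigenspace Fc I).
Local Notation Lb := (Defs.conjmx L).

Lemma hskc : Fc *m Qc = - (Qc *m Fc^T).
Proof. by case: hF => h _ _; rewrite -cplxM h cplxN cplxM cplxT. Qed.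
Lemma hF3c : Fc *m Fc *m Fc = - Fc.
Proof. by case: hF => _ h _; rewrite -!cplxM h cplxN. Qed.
Lemma hrkc : \rank Fc = (n + n)%N.
Proof. by case: hF => _ _ h; rewrite cplx_rank. Qed.

Lemma LF : L *m Fc = I *: L.
Proof. by apply/eigenspaceP; exact: submx_refl. Qed.

Lemma Lb_eig : Lb = eigenspace Fc (- I).
Proof. by rewrite conjmxE map_eigenspace -conjmxE conj_cplx; congr eigenspace; exact: conj_iC. Qed.

Lemma LbF : Lb *m Fc = (- I) *: Lb.
Proof. by rewrite Lb_eig; apply/eigenspaceP; exact: submx_refl. Qed.

Lemma Liso : L *m Qc *m L^T = 0.
Proof. exact: (eig_iso hskc LF LF iC2_neq0). Qed.

Lemma capL : (L :&: Lb)%MS = 0.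
Proof.
apply/eqP; rewrite -submx0; apply/rV_subP => v; rewrite sub_capmx Lb_eig => /andP[h1 h2].
move/eigenspaceP: h1 => e1; move/eigenspaceP: h2; rewrite e1 scaleNr => e2.
have := negX_eq0 e2; move/eqP; rewrite scalemx_eq0 (negbTE iC_neq0) /= => /eqP ->.
exact: sub0mx.
Qed.

Lemma eig_sub k (X : 'M[R[i]]_(k, N)) a : X *m Fc = a *: X -> a != 0 -> (X <= Fc)%MS.
Proof.
move=> h ha; apply/submxP; exists (a^-1 *: X).
by rewrite -scalemxAl h scalerA mulVf ?scale1r.
Qed.

Lemma Lsub : (L + Lb <= Fc)%MS.
Proof.
rewrite addsmx_sub (eig_sub LF iC_neq0) /=; apply: (eig_sub LbF).
by rewrite oppr_eq0 iC_neq0.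
Qed.

Lemma rank_kerFc : \rank (kermx Fc) = 1%N.
Proof. by rewrite mxrank_ker hrkc /N subSnn. Qed.

Lemma fullL : (1%:M <= (L + Lb) + kermx Fc)%MS.
Proof.
set P1 := Fc *m Fc + I *: Fc; set P2 := Fc *m Fc - I *: Fc; set P3 := 1%:M + Fc *m Fc.
have e : (1%:M : 'M[R[i]]_N) = ((- 2^-1) *: P1 + (- 2^-1) *: P2) + P3.
  rewrite /P1 /P2 /P3; apply/matrixP => i j; rewrite !mxE.
  by field.
rewrite {1}e; apply: addmx_sub_adds; first apply: addmx_sub_adds; rewrite ?scalemx_sub //.
- apply/eigenspaceP; rewrite /P1 mulmxDl -scalemxAl hF3c scalerDr scalerA iCiC scaleN1r.
  by rewrite addrC.
- rewrite Lb_eig; apply/eigenspaceP; rewrite /P2 mulmxBl -scalemxAl hF3c scalerBr scalerA mulNr iCiC.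
  by rewrite opprK scale1r scaleNr addrC.
- by apply/sub_kermxP; rewrite /P3 mulmxDl mul1mx hF3c addrN.
Qed.

Lemma rankL : \rank L = n.
Proof.
have h1 : \rank (L + Lb)%MS = (\rank L + \rank L)%N.
  by rewrite mxrank_disjoint_sum ?capL // conj_rank.
have h2 : (\rank (L + Lb)%MS <= n + n)%N by rewrite -hrkc; apply: mxrankS; exact: Lsub.
have h3 : (N <= \rank (L + Lb)%MS + 1)%N.
  rewrite -rank_kerFc; have := mxrank_adds_leqif (L + Lb)%MS (kermx Fc); case => h _.
  by apply: leq_trans h; have := mxrankS fullL; rewrite mxrank1.
move: h2 h3; rewrite h1 /N; lia.
Qed.

Lemma lastL : kermx (Qc *m (L + Lb)%MS^T) *m Fc = 0.
Proof.
have hk : (kermx Fc <= kermx (Qc *m (L + Lb)%MS^T))%MS.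
  apply/sub_kermxP; rewrite mulmxA; apply: (symE Qc_tr); apply: adds_bilL.
    apply: (eig_iso hskc LF (b := 0)); first by rewrite mulmx_ker scale0r.
    by rewrite addr0 iC_neq0.
  apply: (eig_iso hskc LbF (b := 0)); first by rewrite mulmx_ker scale0r.
  by rewrite addr0 oppr_eq0 iC_neq0.
have hr : \rank (kermx (Qc *m (L + Lb)%MS^T)) = 1%N.
  rewrite (rank_perp0 Qc_unit) mxrank_disjoint_sum ?capL // conj_rank rankL /N.
  by rewrite subSnn.
have : (kermx Fc == kermx (Qc *m (L + Lb)%MS^T))%MS.
  by rewrite -(mxrank_leqif_eq hk).2 hr rank_kerFc.
move/eqmxP => e; apply/sub_kermxP; rewrite -e; exact: submx_refl.
Qed.

Lemma RG_B : BnGACS F.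
Proof.
rewrite /BnGACS; cbv zeta; split.
- exact: Liso.
- exact: rankL.
- by apply/eqmx0P; exact: capL.
- by rewrite Lb_eig; apply/eqmxP.
- exact: lastL.
Qed.
End RGtoB.

Lemma B_RG (F : 'M[R]_N) : BnGACS F -> RG F.
Proof.
rewrite /BnGACS; cbv zeta.
set Fc := cplx F; set L := eigenspace Fc I; set Lb := Defs.conjmx L.
case => hiso hrk hcap hneg hK.
have LF : L *m Fc = I *: L by apply/eigenspaceP; exact: submx_refl.
have LbF : Lb *m Fc = (- I) *: Lb by apply/eigenspaceP; case/andP: hneg.
have KF : kermx Fc *m Fc = 0 *: kermx Fc by rewrite mulmx_ker scale0r.
have cap : (L :&: Lb)%MS = 0 by apply/eqmx0P.
have rLb : \rank Lb = n by rewrite conj_rank.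
have rS : \rank (L + Lb)%MS = (n + n)%N by rewrite mxrank_disjoint_sum // rLb hrk.
have capK : ((L + Lb) :&: kermx Fc)%MS = 0.
  apply/eqP; rewrite -submx0; apply/rV_subP => v; rewrite sub_capmx.
  case/andP => /sub_addsmxP [[a b] /= ->] /sub_kermxP e.
  have e2 : a *m L = b *m Lb.
    move: e; rewrite mulmxDl -(mulmxA a L Fc) -(mulmxA b Lb Fc) LF LbF -!scalemxAr scaleNr => /eqP.
    by rewrite -scalerBr scalemx_eq0 (negbTE iC_neq0) subr_eq0 => /eqP.
  have : (a *m L <= L :&: Lb)%MS by rewrite sub_capmx submxMl /= e2 submxMl.
  by rewrite cap submx0 => /eqP z; rewrite z -e2 z addr0 sub0mx.
have rKc : \rank (kermx (Qc *m (L + Lb)%MS^T)) = 1%N.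
  by rewrite (rank_perp0 Qc_unit) rS /N subSnn.
have hKs : (kermx (Qc *m (L + Lb)%MS^T) <= kermx Fc)%MS by apply/sub_kermxP.
have rK : \rank (kermx Fc) = 1%N.
  have h1 : (1 <= \rank (kermx Fc))%N by rewrite -rKc mxrankS.
  have := rank_leq_col ((L + Lb) + kermx Fc)%MS.
  rewrite mxrank_disjoint_sum // rS => h2.
  have eN : N = (n + n).+1 by [].
  lia.
have hKk : (kermx Fc <= kermx (Qc *m (L + Lb)%MS^T))%MS.
  have : (kermx (Qc *m (L + Lb)%MS^T) == kermx Fc)%MS.
    by rewrite -(mxrank_leqif_eq hKs).2 rK rKc.
  by move/eqmxP => e; rewrite -e submx_refl.
have full : (1%:M <= (L + Lb) + kermx Fc)%MS.
  by rewrite sub1mx /row_full mxrank_disjoint_sum // rS rK /N addn1.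
have hKX : forall k (X : 'M[R[i]]_(k, N)), (X <= L + Lb)%MS -> kermx Fc *m Qc *m X^T = 0.
  move=> k X /submxP [d ->]; rewrite trmx_mul mulmxA.
  by move/sub_kermxP: hKk; rewrite mulmxA => ->; rewrite mul0mx.
have hKL := hKX _ _ (addsmxSl L Lb).
have hKLb := hKX _ _ (addsmxSr L Lb).
have hLbiso : Lb *m Qc *m Lb^T = 0.
  by rewrite /Lb !conjmxE map_trmx -(conj_cplx (Qmx R n)) conjmxE -!map_mxM hiso map_mx0.
have cF : Fc *m Fc *m Fc = - Fc.
  apply/eqP; rewrite -addr_eq0; apply/eqP; apply: (full_kill full).
  apply: adds_kill; first apply: adds_kill.
  - by rewrite (eig_cube LF) iCiC mulN1r addNr scale0r.
  - by rewrite (eig_cube LbF) mulrNN iCiC mulN1r opprK addrN scale0r.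
  - by rewrite (eig_cube KF) !mul0r addr0 scale0r.
have sF : Fc *m Qc + Qc *m Fc^T = 0.
  apply: (bil_kill full); apply: adds_bilL; first apply: adds_bilL.
  - apply: adds_bilR; first apply: adds_bilR.
    + by rewrite (eig_bil Qc LF LF) hiso scaler0.
    + by rewrite (eig_bil Qc LF LbF) addrN scale0r.
    + by rewrite (eig_bil Qc LF KF) (symE Qc_tr hKL) scaler0.
  - apply: adds_bilR; first apply: adds_bilR.
    + by rewrite (eig_bil Qc LbF LF) addNr scale0r.
    + by rewrite (eig_bil Qc LbF LbF) hLbiso scaler0.
    + by rewrite (eig_bil Qc LbF KF) (symE Qc_tr hKLb) scaler0.
  - apply: adds_bilR; first apply: adds_bilR.
    + by rewrite (eig_bil Qc KF LF) hKL scaler0.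
    + by rewrite (eig_bil Qc KF LbF) hKLb scaler0.
    + by rewrite (eig_bil Qc KF KF) addr0 scale0r.
split.
- apply: cplx_inj; rewrite cplxN !cplxM cplxT; apply/eqP; rewrite -addr_eq0; exact/eqP.
- by apply: cplx_inj; rewrite cplxN !cplxM.
- rewrite -cplx_rank -/Fc; have := rK; rewrite mxrank_ker.
  have := rank_leq_row Fc; rewrite /N; lia.
Qed.
End Cplx.
Theorem proposition3p3 (R : rcfType) (n : nat) :
  (forall Em F : 'M[R]_(N n),
     pseudo_hermitian Em F -> admissible_pair F (F *m Gend Em))
  /\
  (forall F1 F2 : 'M[R]_(N n),
     admissible_pair F1 F2 ->
     exists Em : 'M[R]_(N n),
       [/\ pseudo_hermitian Em F1, F1 *m Gend Em = F2
         & forall Em' : 'M[R]_(N n),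
             pseudo_hermitian Em' F1 -> F1 *m Gend Em' = F2 -> (Em' == Em)%MS]).
Proof.
split.
  move=> Em F [[hr hnd hiso] hB hc].
  have hF := B_RG hB.
  rewrite /admissible_pair; cbv zeta; split.
  - split => //; apply: RG_B; exact: RG_FG.
  - exact: comm_FG.
  - exact: ker_FG.
  - exact: nondeg_FG.
  - exact: iso_FG.
move=> F1 F2; rewrite /admissible_pair; cbv zeta.
case=> [[hB1 hB2] hcomm hker _ hiso].
have hF1 := B_RG hB1; have hF2 := B_RG hB2.
exists (Em0 F1 F2); split.
- split => //; first exact: Em0_metric.
  by rewrite Gend_Em0 // F1G0 // G0F1.
- by rewrite Gend_Em0 // F1G0.
- move=> Em' [hg' _ hc'] he; exact: Em0_unique.
Qed.
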